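(* Let $l$ be a positive integer such that for every $i\in\mathcal{V}$ there exist $l$ matrices in $\mathcal{M}$ (possibly repeated) whose product, in some order, has all entries of its column indexed by $i$ strictly positive. For $k\ge 1$ let $W_k=M_{(k-1)l+1}M_{(k-1)l+2}\cdots M_{kl}$. Then there exist constants $w>0$ and $d<1$ such that, for each $k\ge 1$, with probability equal to $w$ we have $\lambda(W_k)\le d$, and these events are independent for different $k$.
   Context: Let $\mathcal{G}=(\mathcal{V},\mathcal{E})$ be a strongly connected directed graph with $\mathcal{V}=\{1,\dots,m\}$, with a self-loop $(i,i)\in\mathcal{E}$ at every node. Let $\mathcal{O}_i=\{j:(i,j)\in\mathcal{E}\}$ and $D_i=|\mathcal{O}_i|$. At each time step $k\ge1$ each link $(i,j)\in\mathcal{E}$ is reliable with probability $q_{ij}\in(0,1]$, independently across links and across time steps; let $X_k[i,j]=1$ if $(i,j)$ is reliable at step $k$ and $0$ otherwise. Let $n=m+|\mathcal{E}|$ and index rows/columns of $n\times n$ matrices by $\mathcal{V}\cup\mathcal{E}$ (each link $(i,j)$ is an additional ''virtual buffer'' index). The random matrix $M_k$ is defined by: for $i\in\mathcal{V}$ and $(i,j)\in\mathcal{E}$, $M_k[i,j]=X_k[i,j]/D_i$ and $M_k[i,(i,j)]=(1-X_k[i,j])/D_i$, all other entries of row $i$ being $0$; for $(i,j)\in\mathcal{E}$, $M_k[(i,j),j]=X_k[i,j]$ and $M_k[(i,j),(i,j)]=1-X_k[i,j]$, all other entries of row $(i,j)$ being $0$. Each $M_k$ is row stochastic. $\mathcal{M}$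 denotes the finite set of all $2^{|\mathcal{E}|}$ matrices obtainable this way. For a row stochastic matrix $A$, $\lambda(A)=1-\min_{i_1,i_2}\sum_j\min(A[i_1,j],A[i_2,j])$. *)

(* Defs.v *)
From HB Require Import structures.
From mathcomp Require Import all_boot all_order all_algebra.
From mathcomp Require Import reals.
Set Implicit Arguments.
Unset Strict Implicit.
Unset Printing Implicit Defensive.
Import Order.TTheory GRing.Theory Num.Theory.
Local Open Scope ring_scope.

Section Defs.
Variables (R : realType) (m : nat) (E : {set 'I_m * 'I_m}).

Definition strongly_connected : Prop :=
  forall i j : 'I_m, connect [rel a b | (a, b) \in E] i j.

Definition edge : finType := {e : 'I_m * 'I_m | e \in E}.

(* row/column indices: V (inl) union E (inr, virtual buffers) *)
Definition idx : finType := ('I_m + edge)%type.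

Definition pattern : finType := {ffun edge -> bool}.

Definition outdeg (i : 'I_m) : nat := #|[set j | (i, j) \in E]|.

Definition Xat (X : pattern) (e : 'I_m * 'I_m) : bool :=
  if insub e is Some e' then X e' else false.

Definition mat := idx -> idx -> R.

Definition Mof (X : pattern) : mat := fun r c =>
  match r, c with
  | inl i, inl j => if (i, j) \in E then (Xat X (i, j))%:R / (outdeg i)%:R else 0
  | inl i, inr e => if (sval e).1 == i then (1 - (X e)%:R) / (outdeg i)%:R else 0
  | inr e, inl j => if (sval e).2 == j then (X e)%:R else 0
  | inr e, inr e' => if e == e' then 1 - (X e)%:R else 0
  end.

Definition mulmat (A B : mat) : mat := fun r c => \sum_(z : idx) A r z * B z c.
Definition idmat : mat := fun r c => (r == c)%:R.
(* product A_1 A_2 ... A_n of the list [:: A_1; ...; A_n] *)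
Definition prodmats (s : seq mat) : mat := foldr mulmat idmat s.

Definition lambda (A : mat) : R :=
  1 - \big[Num.min/1]_(p : idx * idx) \sum_(j : idx) Num.min (A p.1 j) (A p.2 j).

(* probability of a single pattern: links independent, link e reliable w.p. q e *)
Definition pat_prob (q : 'I_m * 'I_m -> R) (X : pattern) : R :=
  \prod_(e : edge) (if X e then q (sval e) else 1 - q (sval e)).

(* trajectories of the first T time steps (X_1, ..., X_T); independent across steps *)
Definition traj (T : nat) : finType := {ffun 'I_T -> pattern}.

Definition traj_prob (q : 'I_m * 'I_m -> R) (T : nat) (om : traj T) : R :=
  \prod_(t : 'I_T) pat_prob q (om t).

Definition Prob (q : 'I_m * 'I_m -> R) (T : nat) (A : pred (traj T)) : R :=
  \sum_(om : traj T | A om) traj_prob q om.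

(* X_t for 1-based time t (t <= T); default pattern outside the horizon *)
Definition at_time (T : nat) (om : traj T) (t : nat) : pattern :=
  if insub t.-1 is Some o then om o else [ffun => true].

Definition Mt (T : nat) (om : traj T) (t : nat) : mat := Mof (at_time om t).

Definition Wk (l T : nat) (om : traj T) (k : nat) : mat :=
  prodmats [seq Mt om t | t <- iota ((k - 1) * l + 1) l].

End Defs.

(* Main.v *)
Require Import Defs.
From HB Require Import structures.
From mathcomp Require Import all_boot all_order all_algebra.
From mathcomp Require Import reals.
From mathcomp Require Import ring lra zify.
Import Order.TTheory GRing.Theory Num.Theory.
Local Open Scope ring_scope.
Set Implicit Arguments.
Unset Strict Implicit.
Unset Printing Implicit Defensive.

Section Prob.
Variables (R : realType) (m : nat) (E : {set 'I_m * 'I_m}) (q : 'I_m * 'I_m -> R).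

Lemma pat_prob_sum : \sum_(X : pattern E) pat_prob q X = 1.
Proof.
rewrite /pat_prob -(bigA_distr_bigA (fun (e : edge E) (b : bool) => if b then q (sval e) else 1 - q (sval e))) /=.
by apply: big1 => e _; rewrite big_bool /= addrC subrK.
Qed.

Lemma traj_sum T : \sum_(om : traj E T) traj_prob q om = 1.
Proof.
rewrite /traj_prob -(bigA_distr_bigA (fun (t : 'I_T) (X : pattern E) => pat_prob q X)) /=.
by apply: big1 => t _; rewrite pat_prob_sum.
Qed.

Definition tleft a b (om : traj E (a + b)) : traj E a := [ffun i => om (lshift b i)].
Definition tright a b (om : traj E (a + b)) : traj E b := [ffun i => om (rshift a i)].
Definition tcat a b (u : traj E a) (v : traj E b) : traj E (a + b) :=
  [ffun t => match split t with inl i => u i | inr j => v j end].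

Lemma tleft_cat a b u v : tleft (@tcat a b u v) = u.
Proof. by apply/ffunP => i; rewrite !ffunE (unsplitK (inl _)). Qed.
Lemma tright_cat a b u v : tright (@tcat a b u v) = v.
Proof. by apply/ffunP => i; rewrite !ffunE (unsplitK (inr _)). Qed.
Lemma tcatK a b om : @tcat a b (tleft om) (tright om) = om.
Proof. by apply/ffunP => t; rewrite !ffunE; case: splitP => j Hj; rewrite ffunE; congr (om _); apply: val_inj; rewrite /= Hj. Qed.

Lemma traj_prob_cat a b u v : traj_prob q (@tcat a b u v) = traj_prob q u * traj_prob q v.
Proof.
rewrite /traj_prob big_split_ord /=; congr (_ * _); apply: eq_bigr => i _; rewrite ffunE.
  by rewrite (unsplitK (inl _)).
by rewrite (unsplitK (inr _)).
Qed.

Lemma split_prob a b (F : traj E a -> R) (G : traj E b -> R) :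
  \sum_(om : traj E (a + b)) traj_prob q om * (F (tleft om) * G (tright om)) =
  (\sum_(u : traj E a) traj_prob q u * F u) * (\sum_(v : traj E b) traj_prob q v * G v).
Proof.
rewrite (reindex (fun p : traj E a * traj E b => tcat p.1 p.2)) /=; last first.
  by exists (fun om => (tleft om, tright om)) => [[u v] _|om _]; rewrite /= ?tleft_cat ?tright_cat ?tcatK.
rewrite -(pair_big xpredT xpredT (fun u v => traj_prob q (tcat u v) * (F (tleft (tcat u v)) * G (tright (tcat u v))))) /=.
rewrite big_distrl /=; apply: eq_bigr => u _; rewrite big_distrr /=; apply: eq_bigr => v _.
rewrite traj_prob_cat tleft_cat tright_cat; ring.
Qed.

Lemma at_timeE T (om : traj E T) (o : 'I_T) : at_time om o.+1 = om o.
Proof. by rewrite /at_time /=; case: insubP => [o' _ /val_inj->|] //; rewrite ltn_ord. Qed.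

Lemma at_time_left a b (om : traj E (a + b)) t : (0 < t)%N -> (t <= a)%N ->
  at_time om t = at_time (tleft om) t.
Proof.
case: t => // t _ h.
rewrite (at_timeE (tleft om) (Ordinal h)) ffunE; exact: (at_timeE om (lshift b (Ordinal h))).
Qed.

Lemma at_time_right a b (om : traj E (a + b)) t : (0 < t)%N -> (t <= b)%N ->
  at_time om (a + t) = at_time (tright om) t.
Proof.
case: t => // t _ h.
rewrite (at_timeE (tright om) (Ordinal h)) ffunE addnS; exact: (at_timeE om (rshift a (Ordinal h))).
Qed.

Lemma Wk_left l a b (om : traj E (a + b)) k : (1 <= k)%N -> (k * l <= a)%N ->
  Wk R l om k = Wk R l (tleft om) k.
Proof.
move=> hk hka; rewrite /Wk; congr prodmats; apply/eq_in_map => t.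
have e : ((k - 1) * l + l = k * l)%N by case: k hk {hka} => // k _; rewrite subn1 /= mulSn addnC.
rewrite mem_iota => /andP[h1 h2]; rewrite /Mt at_time_left //.
  by apply: leq_trans h1; rewrite addn1.
by rewrite -ltnS; apply: leq_trans h2 _; rewrite -addnA [(1 + l)%N]addnC addnA e addn1.
Qed.

Lemma Wk_right l a b (om : traj E (a + b)) k : (1 <= k)%N -> a = ((k - 1) * l)%N -> (l <= b)%N ->
  Wk R l om k = Wk R l (tright om) 1.
Proof.
move=> hk ha hlb; rewrite /Wk -ha subnn mul0n add0n iotaDl -map_comp.
congr prodmats; apply/eq_in_map => t; rewrite mem_iota => /andP[h1 h2] /=.
rewrite /Mt at_time_right //; lia.
Qed.

Lemma ProbE T (A : pred (traj E T)) : Prob q A = \sum_om traj_prob q om * (A om)%:R.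
Proof. by rewrite /Prob big_mkcond; apply: eq_bigr => om _; case: (A om); rewrite ?mulr1 ?mulr0. Qed.

Lemma seq_max (K : seq nat) : K != [::] -> exists2 k0, k0 \in K & forall k, k \in K -> (k <= k0)%N.
Proof.
elim: K => // x [|y K] IH _.
  by exists x => [|k]; rewrite ?mem_seq1 // => /eqP->.
have [k0 hk0 hmax] := IH isT.
have [le|lt] := leqP x k0.
  exists k0; first by rewrite in_cons hk0 orbT.
  by move=> k; rewrite in_cons => /orP[/eqP->//|]; apply: hmax.
exists x; first by rewrite mem_head.
move=> k; rewrite in_cons => /orP[/eqP->//|/hmax h]; apply: leq_trans h (ltnW lt).
Qed.

Lemma prob_blocks l (d : R) : (0 < l)%N ->
  forall n T (K : seq nat), size K = n -> uniq K ->
  (forall k, k \in K -> (1 <= k)%N && (k * l <= T)%N) ->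
  Prob q (fun om : traj E T => all (fun k => lambda (Wk R l om k) <= d) K)
  = (Prob q (fun v : traj E l => lambda (Wk R l v 1) <= d)) ^+ n.
Proof.
move=> hl; elim=> [|n IH] T K.
  by case: K => // _ _ _; rewrite expr0 /Prob /= -(traj_sum T); apply: eq_bigl.
move=> hs hu hK.
have [k0 hk0 hmax] : exists2 k0, k0 \in K & forall k, k \in K -> (k <= k0)%N.
  by apply: seq_max; move: hs; case: (K).
have /andP[k01 k0T] := hK _ hk0.
set a := ((k0 - 1) * l)%N.
have e1 : (a + l = k0 * l)%N by rewrite /a -mulSnr subn1 prednK.
have [b eT] : exists b, T = (a + b)%N by exists (T - a)%N; rewrite subnKC //; rewrite -e1 in k0T; apply: leq_trans k0T; apply: leq_addr.
subst T.
have hlb : (l <= b)%N by rewrite -e1 leq_add2l in k0T.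
set K' := rem k0 K.
rewrite ProbE.
transitivity (\sum_(om : traj E (a + b)) traj_prob q om *
   ((all (fun k => lambda (Wk R l (tleft om) k) <= d) K')%:R *
    ((lambda (Wk R l (tright om) 1) <= d)%R)%:R)).
  apply: eq_bigr => om _; congr (_ * _).
  rewrite (perm_all _ (perm_to_rem hk0)) /= (Wk_right _ k01 (erefl _) hlb) andbC -/K'.
  have -> : all (fun k => lambda (Wk R l om k) <= d) K' = all (fun k => lambda (Wk R l (tleft om) k) <= d) K'; last first.
    by case: (all _ _); case: (_ <= _); rewrite ?mul1r ?mul0r.
  apply: eq_in_all => k hk.
  have hkK : k \in K by move: hk; rewrite (mem_rem_uniq _ hu) => /andP[].
  have hkk0 : k != k0 by move: hk; rewrite (mem_rem_uniq _ hu) => /andP[].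
  have /andP[k1 _] := hK _ hkK.
  rewrite (Wk_left _ k1) //.
  have hlt : (k <= k0 - 1)%N by rewrite leq_subRL //; rewrite add1n ltn_neqAle hkk0 hmax.
  by rewrite /a leq_mul2r hlt orbT.
rewrite (split_prob (fun u => (all (fun k => lambda (Wk R l u k) <= d) K')%:R)
                    (fun v => ((lambda (Wk R l v 1) <= d)%R)%:R)).
rewrite exprSr; congr (_ * _).
  rewrite -(IH a K') -?ProbE //.
  - by rewrite size_rem // hs.
  - exact: rem_uniq.
  move=> k hk.
  have hkK : k \in K by move: hk; rewrite (mem_rem_uniq _ hu) => /andP[].
  have hkk0 : k != k0 by move: hk; rewrite (mem_rem_uniq _ hu) => /andP[].
  have /andP[k1 _] := hK _ hkK; rewrite k1 /=.
  have hlt : (k <= k0 - 1)%N by rewrite leq_subRL //; rewrite add1n ltn_neqAle hkk0 hmax.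
  by rewrite /a leq_mul2r hlt orbT.
have [c eb] : exists c, b = (l + c)%N by exists (b - l)%N; rewrite subnKC.
subst b; rewrite ProbE.
transitivity (\sum_(v : traj E (l + c)) traj_prob q v *
   (((lambda (Wk R l (tleft v) 1) <= d)%R)%:R * (fun _ => 1 : R) (tright v))).
  by apply: eq_bigr => v _; rewrite mulr1 (Wk_left _ (leqnn 1)) ?mul1n.
rewrite (split_prob (fun u => ((lambda (Wk R l u 1) <= d)%R)%:R) (fun _ => 1)); under [X in _ * X = _]eq_bigr do rewrite mulr1.
by rewrite traj_sum mulr1.
Qed.
End Prob.

Section Mat.
Variables (R : realType) (m : nat) (E : {set 'I_m * 'I_m}).

Definition nonneg (A : mat R E) := forall r c, 0 <= A r c.

Lemma Mof_ge0 X : nonneg (Mof R X).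
Proof.
move=> [i|e] [j|e'] /=.
- by case: ifP => // _; rewrite divr_ge0.
- by case: ifP => // _; rewrite divr_ge0 // subr_ge0; case: (X e').
- by case: ifP => // _; case: (X e).
- by case: ifP => // _; rewrite subr_ge0; case: (X e).
Qed.

Lemma mulmat_ge0 A B : nonneg A -> nonneg B -> nonneg (mulmat A B).
Proof. by move=> hA hB r c; apply: sumr_ge0 => z _; rewrite mulr_ge0. Qed.

Lemma idmat_ge0 : nonneg (@idmat R m E).
Proof. by move=> r c; rewrite /idmat ler0n. Qed.

Lemma prodmats_ge0 (s : seq (pattern E)) : nonneg (prodmats [seq Mof R X | X <- s]).
Proof.
elim: s => [|X s IH] /=; first exact: idmat_ge0.
by apply: mulmat_ge0 => //; apply: Mof_ge0.
Qed.

Lemma mul_pos A B r c z : nonneg A -> nonneg B -> 0 < A r z -> 0 < B z c -> 0 < mulmat A B r c.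
Proof.
move=> hA hB h1 h2; rewrite /mulmat (bigD1 z) //=.
by apply: ltr_wpDr; [apply: sumr_ge0 => y _; rewrite mulr_ge0 | rewrite mulr_gt0].
Qed.

Lemma mul_pos_ex A B r c : nonneg A -> nonneg B -> 0 < mulmat A B r c ->
  exists z, 0 < A r z /\ 0 < B z c.
Proof.
move=> hA hB h.
case: (boolP [exists z, (0 < A r z) && (0 < B z c)]).
  by move=> /existsP [z /andP[h1 h2]]; exists z.
move=> /existsPn hn.
move: h; rewrite /mulmat big1 ?ltxx // => z _.
move: (hn z); rewrite negb_and => /orP[h1|h1].
  have -> : A r z = 0 by apply/eqP; rewrite eq_le hA andbT leNgt.
  by rewrite mul0r.
have -> : B z c = 0 by apply/eqP; rewrite eq_le hB andbT leNgt.
by rewrite mulr0.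
Qed.

Definition ptrue : pattern E := [ffun => true].
Definition Mtrue := Mof R ptrue.

Lemma outdeg_gt0 j k : (j, k) \in E -> (0 < outdeg E j)%N.
Proof. by move=> h; rewrite /outdeg card_gt0; apply/set0Pn; exists k; rewrite inE. Qed.

Lemma Mtrue_ll j k : (j, k) \in E -> 0 < Mtrue (inl j) (inl k).
Proof.
move=> h; rewrite /Mtrue /= h /Xat insubT /= ffunE mul1r invr_gt0 ltr0n.
exact: outdeg_gt0 h.
Qed.

Lemma Mtrue_rl (e : edge E) : 0 < Mtrue (inr e) (inl (sval e).2).
Proof. by rewrite /Mtrue /= eqxx ffunE. Qed.

Lemma Mtrue_rr (e e' : edge E) : Mtrue (inr e) (inr e') = 0.
Proof. by rewrite /Mtrue /= ffunE subrr; case: ifP. Qed.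

Variable i : 'I_m.
Hypothesis hloop : (i, i) \in E.

Definition P n r := 0 < prodmats (nseq n Mtrue) r (inl i).

Lemma nseq_ge0 n : nonneg (prodmats (nseq n Mtrue)).
Proof. by rewrite /Mtrue -map_nseq; apply: prodmats_ge0. Qed.

Lemma P_step n r z : 0 < Mtrue r z -> P n z -> P n.+1 r.
Proof. by move=> h1 h2; apply: (mul_pos _ _ h1 h2); [apply: Mof_ge0|apply: nseq_ge0]. Qed.

Lemma P_ex n r : P n.+1 r -> exists z, 0 < Mtrue r z /\ P n z.
Proof. by apply: mul_pos_ex; [apply: Mof_ge0|apply: nseq_ge0]. Qed.

Lemma P0 r : P 0 r -> r = inl i.
Proof. by rewrite /P /= /idmat; case: eqP => // _; rewrite ltxx. Qed.

Lemma P_mono n r : P n r -> P n.+1 r.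
Proof.
elim: n r => [|n IH] r.
  move=> /P0 ->; apply: (P_step (z := inl i)); first exact: Mtrue_ll.
  by rewrite /P /= /idmat eqxx ltr01.
by move=> /P_ex [z [h1 h2]]; apply: (P_step h1); apply: IH.
Qed.

Lemma P_key X n r c : 0 < Mof R X r c -> P n c -> P n.+1 r.
Proof.
case: r c => [j|e] [k|e'] /=.
- case: ifP => [hjk _|]; last by rewrite ltxx.
  by apply: P_step; apply: Mtrue_ll.
- case: eqP => [hj _|]; last by rewrite ltxx.
  case: n => [/P0 //|n /P_ex [[k|e0] [h1 h2]]]; last by rewrite Mtrue_rr ltxx in h1.
  move: h1; rewrite /Mtrue /=; case: eqP => [hk _|]; last by rewrite ltxx.
  apply: P_mono; apply: (P_step (z := inl k)) h2; apply: Mtrue_ll.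
  by rewrite -hj -hk -surjective_pairing; apply: (valP e').
- case: eqP => [hk _|]; last by rewrite ltxx.
  by rewrite -hk; apply: P_step; apply: Mtrue_rl.
- case: eqP => [-> _|]; last by rewrite ltxx.
  exact: P_mono.
Qed.

Lemma col_P (s : seq (pattern E)) r :
  0 < prodmats [seq Mof R X | X <- s] r (inl i) -> P (size s) r.
Proof.
elim: s r => [|X s IH] r /=.
  by rewrite /idmat; case: eqP => [->|]; rewrite ?ltxx // /P /= /idmat eqxx.
move/mul_pos_ex => [].
- exact: Mof_ge0.
- exact: prodmats_ge0.
by move=> z [h1 /IH h2]; apply: (P_key h1).
Qed.

Lemma lambda_lt1 (A : mat R E) : nonneg A -> (forall r, 0 < A r (inl i)) -> lambda A < 1.
Proof.
move=> hA hc; rewrite /lambda ltrBlDr ltrDl.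
apply: (big_ind (fun x => 0 < x)) => //; first by move=> x y hx hy; rewrite lt_min hx hy.
move=> p _; rewrite (bigD1 (inl i)) //=.
apply: ltr_wpDr; first by apply: sumr_ge0 => j _; rewrite le_min !hA.
by rewrite lt_min !hc.
Qed.
End Mat.

Theorem lemma1 (R : realType) (m : nat) (E : {set 'I_m * 'I_m})
    (q : 'I_m * 'I_m -> R) (l : nat) :
  (0 < m)%N ->
  (forall i : 'I_m, (i, i) \in E) ->
  strongly_connected E ->
  (forall e, e \in E -> 0 < q e <= 1) ->
  (0 < l)%N ->
  (forall i : 'I_m, exists s : seq (pattern E),
      size s = l /\
      forall r : idx E, 0 < prodmats [seq Mof R X | X <- s] r (inl i)) ->
  exists w d : R, 0 < w /\ d < 1 /\
    forall (T : nat) (K : seq nat),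
      uniq K ->
      (forall k, k \in K -> (1 <= k)%N && (k * l <= T)%N) ->
      Prob q (fun om : traj E T => all (fun k => lambda (Wk R l om k) <= d) K)
        = w ^+ size K.
Proof.
move=> hm hloop _ hq hl hcol.
pose i0 : 'I_m := Ordinal hm.
have [s [hs hpos]] := hcol i0.
pose utrue : traj E l := [ffun => @ptrue m E].
have hW : Wk R l utrue 1 = prodmats (nseq l (@Mtrue R m E)).
  rewrite /Wk; congr prodmats.
  have hM : forall t, Mt R utrue t = @Mtrue R m E.
    by move=> t; rewrite /Mt /at_time; case: insub => [o|]; rewrite ?ffunE.
  rewrite (eq_map hM); move: (iota _ _) (size_iota 1 l) => z <-.
  by elim: z => //= x z ->.
have hlt : lambda (Wk R l utrue 1) < 1.
  rewrite hW; apply: (lambda_lt1 (i := i0)); first exact: nseq_ge0.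
  move=> r; rewrite -hs; apply: (col_P (hloop i0)); exact: hpos.
pose d := \big[Num.max/0]_(u : traj E l | lambda (Wk R l u 1) < 1) lambda (Wk R l u 1).
have hd : lambda (Wk R l utrue 1) <= d by apply: le_bigmax_cond.
exists (Prob q (fun v : traj E l => lambda (Wk R l v 1) <= d)), d.
split; [|split].
- have tp_ge0 : forall T (om : traj E T), 0 <= traj_prob q om.
    move=> T om; apply: prodr_ge0 => t _; apply: prodr_ge0 => e _.
    have /andP[h1 h2] := hq _ (valP e).
    by case: ifP => _; [apply: ltW | rewrite subr_ge0].
  rewrite /Prob (bigD1 utrue) //=; apply: ltr_wpDr; first by apply: sumr_ge0 => om _; apply: tp_ge0.
  apply: prodr_gt0 => t _; rewrite ffunE; apply: prodr_gt0 => e _; rewrite ffunE.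
  by have /andP[] := hq _ (valP e).
- by apply: bigmax_lt => // u.
move=> T K hu hK; exact: (prob_blocks E q d hl (erefl (size K)) hu hK).
Qed.
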